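(* Let $N=\{1,\dots,n\}$ and let $F:2^N\to\mathbb{R}$ be quasi-submodular. Run the minimization procedure (described in the context) from $X_0=\emptyset$ and let $Q_+$ be its output, and from $X_0=N$ and let $S_+$ be its output. Then $Q_+$ and $S_+$ are both local minima of $F$.
   Context: For $A\subseteq N$ and $i\in N$, write $A+i=A\cup\{i\}$, $A-i=A\setminus\{i\}$, and $F(i\mid A)=F(A+i)-F(A)$. $F$ is quasi-submodular if for all $X,Y\subseteq N$ both hold: $F(X\cap Y)\ge F(X)\Rightarrow F(Y)\ge F(X\cup Y)$, and $F(X\cap Y)>F(X)\Rightarrow F(Y)>F(X\cup Y)$. A set $X\subseteq N$ is a local minimum of $F$ if $F(X-i)\ge F(X)$ for all $i\in X$ and $F(X+j)\ge F(X)$ for all $j\in N\setminus X$. Minimization procedure: given $X_0\subseteq N$, for $t=0,1,2,\dots$: let $U_t=\{u\in N\setminus X_t: F(u\mid X_t)<0\}$ and $Y_t=X_t\cup U_t$; let $D_t=\{d\in X_t: F(d\mid Y_t-d)>0\}$ and $X_{t+1}=Y_t\setminus D_t$; if $X_{t+1}=X_t$, stop and output $X_t$; otherwise continue with $t+1$. *)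

(* Defs.v *)
(* N = {1,...,n} is rendered as the finite type 'I_n,
   subsets of N as {set 'I_n}, and F : 2^N -> R with R a real field. *)
From HB Require Import structures.
From mathcomp Require Import all_boot all_order all_algebra.
Set Implicit Arguments. Unset Strict Implicit. Unset Printing Implicit Defensive.
Import Order.TTheory GRing.Theory Num.Theory.
Local Open Scope ring_scope.

Section Defs.
Variables (R : realFieldType) (n : nat).
Implicit Types (F : {set 'I_n} -> R) (A X Y : {set 'I_n}).

Definition Fmarg F (i : 'I_n) A : R := F (i |: A) - F A.

Definition quasi_submodular F : Prop :=
  forall X Y,
    (F (X :&: Y) >= F X -> F Y >= F (X :|: Y)) /\
    (F (X :&: Y) > F X -> F Y > F (X :|: Y)).

Definition local_min F X : Prop :=
  (forall i, i \in X -> F (X :\ i) >= F X) /\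
  (forall j, j \notin X -> F (j |: X) >= F X).

Definition Uset F X : {set 'I_n} := [set u | (u \notin X) && (Fmarg F u X < 0)].
Definition Yset F X : {set 'I_n} := X :|: Uset F X.
Definition Dset F X : {set 'I_n} :=
  [set d | (d \in X) && (Fmarg F d (Yset F X :\ d) > 0)].
Definition step F X : {set 'I_n} := Yset F X :\: Dset F X.

Definition iterate F X0 (t : nat) : {set 'I_n} := iter t (step F) X0.

(* The procedure started at X0 stops (at some t with X_{t+1} = X_t) and
   every stopping point's set (= the output, since the sequence is
   constant afterwards) satisfies P. *)
Definition output_satisfies F X0 (P : {set 'I_n} -> Prop) : Prop :=
  (exists t, step F (iterate F X0 t) = iterate F X0 t) /\
  (forall t, step F (iterate F X0 t) = iterate F X0 t ->
             (forall s, (s < t)%N -> step F (iterate F X0 s) != iterate F X0 s) ->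
             P (iterate F X0 t)).
End Defs.

(* Main.v *)
Require Import Defs.
From mathcomp Require Import all_boot all_order all_algebra.
Import Order.TTheory GRing.Theory Num.Theory.
Local Open Scope ring_scope.
Set Implicit Arguments. Unset Strict Implicit.

Section S.
Variables (R : realFieldType) (n : nat) (F : {set 'I_n} -> R).
Hypothesis qs : quasi_submodular F.

Lemma inter_union (A B : {set 'I_n}) d : A \subset B -> d \notin B ->
  (d |: A) :&: B = A /\ (d |: A) :|: B = d |: B.
Proof.
move=> sAB dB; split; apply/setP=> x; rewrite !inE.
- case: (x =P d) => [->|_] /=; first by rewrite (negbTE dB); case: (d \in A) (subsetP sAB d) => //= /(_ isT); rewrite (negbTE dB).
  by case xA: (x \in A) => //=; rewrite (subsetP sAB).
- case: (x =P d) => //= _; case xA: (x \in A) => //=; by rewrite (subsetP sAB).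
Qed.

Lemma mono_lt (A B : {set 'I_n}) d : A \subset B -> d \notin B ->
  Fmarg F d A < 0 -> Fmarg F d B < 0.
Proof.
move=> sAB dB; rewrite /Fmarg !subr_lt0 => h.
have [hI hU] := inter_union sAB dB.
have := (qs (d |: A) B).2; rewrite hI hU; exact.
Qed.

Lemma mono_le (A B : {set 'I_n}) d : A \subset B -> d \notin B ->
  Fmarg F d A <= 0 -> Fmarg F d B <= 0.
Proof.
move=> sAB dB; rewrite /Fmarg !subr_le0 => h.
have [hI hU] := inter_union sAB dB.
have := (qs (d |: A) B).1; rewrite hI hU; exact.
Qed.

Lemma mono_gt (A B : {set 'I_n}) d : A \subset B -> d \notin B ->
  Fmarg F d B > 0 -> Fmarg F d A > 0.
Proof.
move=> sAB dB; rewrite !ltNge; apply: contra; exact: mono_le.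
Qed.

Lemma fix_Y X : step F X = X -> Yset F X = X.
Proof.
move=> hX; apply/eqP; rewrite eqEsubset subsetUl andbT; apply/subsetP=> u uY.
case uD: (u \in Dset F X); first by move: uD; rewrite inE => /andP [].
by rewrite -hX inE uD.
Qed.

Lemma fix_local X : step F X = X -> local_min F X.
Proof.
move=> hX; split.
- move=> i iX; rewrite leNgt; apply/negP=> hlt.
  have : i \notin step F X.
    rewrite /step inE negb_and negbK; apply/orP; left.
    rewrite /Dset inE iX /= /Fmarg.
    have -> : Yset F X :\ i = X :\ i.
      by rewrite (fix_Y hX).
    by rewrite setD1K // subr_gt0.
  by rewrite hX iX.
- move=> j jX; rewrite leNgt; apply/negP=> hlt.
  have : j \in step F X.
    rewrite /step inE /Dset inE (negbTE jX) /= /Yset inE /Uset inE jX /=.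
    by rewrite /Fmarg subr_lt0 hlt orbT.
  by rewrite hX (negbTE jX).
Qed.

Lemma iterS X0 t : iterate F X0 t.+1 = step F (iterate F X0 t).
Proof. by []. Qed.

Lemma terminate (P : {set 'I_n} -> Prop) (f : {set 'I_n} -> nat) X0 :
  P X0 -> (forall X, P X -> P (step F X)) -> (forall X, (f X <= n)%N) ->
  (forall X, P X -> step F X != X -> (f X < f (step F X))%N) ->
  exists t, step F (iterate F X0 t) = iterate F X0 t.
Proof.
move=> P0 PS fb fS.
have Pt : forall t, P (iterate F X0 t) by elim=> [|t IH] //; rewrite iterS; apply: PS.
suff : forall t, (exists t, step F (iterate F X0 t) = iterate F X0 t) \/ (t <= f (iterate F X0 t))%N.
  by move=> /(_ n.+1) [//|]; rewrite leqNgt ltnS fb.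
elim=> [|t]; first by right.
case=> [h|IH]; first by left.
case: (eqVneq (step F (iterate F X0 t)) (iterate F X0 t)) => [e|ne]; first by left; exists t.
by right; rewrite iterS; apply: leq_trans (fS _ (Pt t) ne).
Qed.

Lemma output_ok X0 : (exists t, step F (iterate F X0 t) = iterate F X0 t) ->
  output_satisfies F X0 (local_min F).
Proof. by move=> h; split=> // t ht _; apply: fix_local. Qed.
End S.

Theorem lemma4 (R : realFieldType) (n : nat) (F : {set 'I_n} -> R) :
  quasi_submodular F ->
  output_satisfies F set0 (local_min F) /\
  output_satisfies F [set: 'I_n] (local_min F).
Proof.
move=> qs; split; apply: output_ok.
- pose P (X : {set 'I_n}) := forall d, d \in X -> Fmarg F d (X :\ d) < 0.
  have hD : forall X : {set 'I_n}, P X -> Dset F X = set0.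
    move=> X PX; apply/setP=> d; rewrite !inE; case dX: (d \in X) => //=.
    rewrite ltNge le_eqVlt (mono_lt qs _ _ (PX d dX)) ?orbT //.
      by apply: setSD; apply: subsetUl.
    by rewrite !inE eqxx.
  apply: (@terminate _ _ F P (fun X => #|X|)).
  + by move=> d; rewrite inE.
  + move=> X PX; rewrite /step hD // setD0 => d; rewrite /Yset inE => /orP [dX|].
      apply: (mono_lt qs _ _ (PX d dX)); last by rewrite !inE eqxx.
      by apply: setSD; apply: subsetUl.
    rewrite /Uset inE => /andP [dX hd]; apply: (mono_lt qs _ _ hd); last by rewrite !inE eqxx.
    apply/subsetP=> x xX; rewrite in_setD1 /Yset in_setU xX /= andbT.
    by apply/eqP=> exd; rewrite -exd xX in dX.
  + by move=> X; apply: leq_trans (max_card _) _; rewrite card_ord.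
  + move=> X PX ne; apply: proper_card; rewrite properEneq eq_sym ne /step hD // setD0.
    exact: subsetUl.
- pose P (X : {set 'I_n}) := forall u, u \notin X -> Fmarg F u X > 0.
  have hU : forall X : {set 'I_n}, P X -> Uset F X = set0.
    move=> X PX; apply/setP=> d; rewrite !inE; case dX: (d \in X) => //=.
    by rewrite ltNge le_eqVlt (PX d) ?dX // orbT.
  apply: (@terminate _ _ F P (fun X => #|~: X|)).
  + by move=> d; rewrite inE.
  + move=> X PX u; rewrite /step /Yset hU // setU0 inE negb_and negbK => /orP [uD|uX].
      move: uD; rewrite /Dset /Yset hU // setU0 inE => /andP [uX hu].
      apply: (mono_gt qs _ _ hu); last by rewrite !inE eqxx.
      apply/subsetP=> x; rewrite !inE => /andP [xD ->]; rewrite andbT.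
      by apply/eqP=> exu; move: xD; rewrite exu uX hu.
    apply: (mono_gt qs _ _ (PX u uX)) => //; exact: subsetDl.
  + by move=> X; apply: leq_trans (max_card _) _; rewrite card_ord.
  + move=> X PX ne; apply: proper_card; rewrite properEneq; apply/andP; split.
      by apply: contra ne => /eqP e; apply/eqP; rewrite -[step F X]setCK -e setCK.
    by rewrite setCS /step /Yset hU // setU0 subDset subsetUr.
Qed.
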